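(* Let $M$ be an $\widehat{\mathrm{FI}}$-module with generation degree $\le a$. Then $\Sigma^{a+2}M$ is an $\mathrm{FI}$-module.
   Context: $\widehat{\mathrm S}_n=\{(\sigma,d)\in\mathrm S_n\times\mathbb Z: d\text{ odd}\iff\operatorname{sgn}\sigma=-1\}$ ($n\ge2$; trivial for $n=0,1$). $\widehat{\mathrm{FI}}$: objects $n\in\mathbb N$, $\widehat{\mathrm{FI}}(n,m)=\widehat{\mathrm S}_m/i_2(\widehat{\mathrm S}_{m-n})$ ($i_1,i_2$ inclusions on first/last letters), composition $([s],[t])\mapsto[t\,i_1(s)]$; it carries a monoidal structure with $n\oplus m=n+m$, defined on morphisms via $i_1,i_2$ and a braiding coming from $\mathrm{Br}_n\to\widehat{\mathrm S}_n$, $\sigma_{i,i+1}\mapsto((i\ i{+}1),1)$; on automorphisms, $-\oplus 1$ is $i_1:\widehat{\mathrm S}_n\to\widehat{\mathrm S}_{n+1}$. $\Sigma M$ is the restriction of $M$ along $-\oplus1$, so $(\Sigma M)_n=M_{n+1}$. Generation degree $\le a$: $M$ is a quotient of $\mathbf I(W)$, $\mathbf I(W)_m=\bigoplus_{n\le m}\mathbb Z[\widehat{\mathrm{FI}}(n,m)]\otimes_{\mathbb Z\widehat{\mathrm S}_n}W_n$, with $W_n=0$ for $n>a$. An $\widehat{\mathrm{FI}}$-module is an $\mathrm{FI}$-module if it factors through $\widehat{\mathrm{FI}}\to\mathrm{FI}$ (induced by $\widehat{\mathrm S}_m\to\mathrm S_m$). *)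

(* Defs.v *)
From HB Require Import structures.
From mathcomp Require Import all_boot all_order all_algebra all_fingroup.
Set Implicit Arguments. Unset Strict Implicit. Unset Printing Implicit Defensive.
Import GRing.Theory.
Local Open Scope ring_scope.

(* Convention: permutations are composed as functions, i.e.            *)
(* hmul p q acts by x |-> p.1 (q.1 x) ; d components add.               *)

Definition hat (m : nat) := ('S_m * int)%type.

Definition inHat (m : nat) (p : hat m) : bool :=
  if (1 < m)%N then odd_perm p.1 == odd `|p.2|%N else p.2 == 0.

Definition hone (m : nat) : hat m := (1%g, 0).

Definition hmul (m : nat) (p q : hat m) : hat m := ((q.1 * p.1)%g, p.2 + q.2).

Definition mkperm (k : nat) (f : 'I_k -> 'I_k) : 'S_k :=
  match @idP (injectiveb f) with
  | ReflectT H => perm (elimT (injectiveP f) H)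
  | ReflectF _ => 1%g
  end.

Definition fun_ord (k : nat) (g : nat -> nat) : 'I_k -> 'I_k :=
  fun x => insubd x (g x).

Definition pnat (m : nat) (s : 'S_m) : nat -> nat :=
  fun x => if (insub x : option 'I_m) is Some i then val (s i) else x.

Definition ext_perm (m k : nat) (s : 'S_m) : 'S_k := mkperm (@fun_ord k (pnat s)).
Arguments ext_perm : clear implicits.
Definition i1 (m k : nat) (s : hat m) : hat k := (ext_perm m k s.1, s.2).
Arguments i1 : clear implicits.

Definition shift_perm (n m : nat) (u : 'S_(m - n)) : 'S_m :=
  mkperm (@fun_ord m (fun x => if (x < n)%N then x else (n + pnat u (x - n))%N)).
Arguments shift_perm : clear implicits.
Definition i2 (n m : nat) (u : hat (m - n)) : hat m := (shift_perm n m u.1, u.2).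
Arguments i2 : clear implicits.

(* \hat{FI}-modules.  A morphism n -> m (n <= m) of \hat{FI} is a coset *)
(* [s] = s i_2(\hat S_(m-n)), s in \hat S_m; a module is given on      *)
(* representatives and required to be well defined on cosets.          *)

Record FIhatData := {
  Mob : nat -> zmodType;
  Mmap : forall n m : nat, hat m -> {additive Mob n -> Mob m}
}.
Arguments Mmap : clear implicits.


Definition isFIhatModule (M : FIhatData) : Prop :=
  (forall (n m : nat) (s : hat m) (u : hat (m - n)),
      (n <= m)%N -> inHat s -> inHat u ->
      forall x, Mmap M n m (hmul s (i2 n m u)) x = Mmap M n m s x) /\
  (forall (n : nat) x, Mmap M n n (hone n) x = x) /\
  (forall (n m k : nat) (s : hat m) (t : hat k),
      (n <= m)%N -> (m <= k)%N -> inHat s -> inHat t ->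
      forall x, Mmap M m k t (Mmap M n m s x) = Mmap M n k (hmul t (i1 m k s)) x).

(* FI-modules: the functor factors through \hat{FI} -> FI, i.e. M([s])
   only depends on the injection [n] -> [m] obtained by restricting the
   permutation of s to the first n letters. *)
Definition factorsThroughFI (M : FIhatData) : Prop :=
  forall (n m : nat) (s t : hat m), (n <= m)%N -> inHat s -> inHat t ->
    (forall i : 'I_m, (i < n)%N -> s.1 i = t.1 i) ->
    forall x, Mmap M n m s x = Mmap M n m t x.

Definition isFImodule (M : FIhatData) : Prop :=
  isFIhatModule M /\ factorsThroughFI M.

(* The functor - (+) 1 on morphisms: [s] (+) id_1 = [i_1(s) (id_n (+) b)]*)
(* where b : 1 (+) (m-n) -> (m-n) (+) 1 is the braiding, whose image in  *)
(* \hat S_(m+1) is (cycle sending letter n to m, shifting n+1..m down,   *)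
(* m - n), the image of a product of m - n positive generators.          *)

Definition beta_perm (n m : nat) : 'S_(m.+1) :=
  mkperm (@fun_ord m.+1
    (fun x => if (x < n)%N then x else if x == n then m else x.-1)).

Definition beta (n m : nat) : hat m.+1 := (beta_perm n m, (m - n)%:Z).

Definition plus1 (n m : nat) (s : hat m) : hat m.+1 :=
  hmul (i1 m m.+1 s) (beta n m).
Arguments plus1 : clear implicits.

Definition Sigma (M : FIhatData) : FIhatData :=
  {| Mob := fun n => Mob M n.+1;
     Mmap := fun n m s => Mmap M n.+1 m.+1 (plus1 n m s) |}.

(* Generation degree <= a: M is a quotient of I(W) with W_n = 0 for n>a.*)
(* A map I(W) -> M is given (induction adjunction) by \hat S_n-         *)
(* equivariant maps phi_n : W_n -> M_n; it is surjective iff every      *)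
(* element of M_m is a finite sum of M([s])(phi_n(w)), n <= m, since     *)
(* I(W)_m is generated by the elementary tensors [s] (x) w.             *)

Definition genDegLe (M : FIhatData) (a : nat) : Prop :=
  exists (W : nat -> zmodType)
         (act : forall n : nat, hat n -> {additive W n -> W n})
         (phi : forall n : nat, {additive W n -> Mob M n}),
    (forall n : nat, (a < n)%N -> forall w : W n, w = 0) /\
    (forall (n : nat) (w : W n), act n (hone n) w = w) /\
    (forall (n : nat) (g h : hat n), inHat g -> inHat h ->
        forall w : W n, act n (hmul g h) w = act n g (act n h w)) /\
    (forall (n : nat) (g : hat n), inHat g ->
        forall w : W n, phi n (act n g w) = Mmap M n n g (phi n w)) /\
    (forall (m : nat) (x : Mob M m),
        exists l : seq {n : nat & (hat m * W n)%type},
          all (fun p => (projT1 p <= m)%N && inHat (projT2 p).1) l /\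
          x = \sum_(p <- l) Mmap M (projT1 p) m (projT2 p).1
                                 (phi (projT1 p) (projT2 p).2)).

(* Main.v *)
Require Import Defs.
From mathcomp Require Import zify.
From mathcomp Require Import all_boot all_order all_algebra all_fingroup.
Import Defs.
Set Implicit Arguments. Unset Strict Implicit. Unset Printing Implicit Defensive.

Ltac ifl := repeat (first [ match goal with H : context [if _ then _ else _] |- _ => move: H end
  | match goal with |- context [if ?b then _ else _] => case: (@idP b) => ? end ]); intros; lia.

Lemma mkperm_val k (g : nat -> nat) :
  (forall x, (x < k)%N -> (g x < k)%N) ->
  (forall x y, (x < k)%N -> (y < k)%N -> g x = g y -> x = y) ->
  forall x : 'I_k, val (mkperm (@fun_ord k g) x) = g (val x).
Proof.
move=> Hlt Hinj.
have Hf : forall x : 'I_k, val (@fun_ord k g x) = g x.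
  by move=> x; rewrite /fun_ord val_insubd Hlt.
have Hi : injective (@fun_ord k g).
  move=> x y /(congr1 val); rewrite !Hf => /Hinj h; apply: val_inj; exact: h.
move=> x; rewrite /mkperm.
destruct (@idP (injectiveb (@fun_ord k g))) as [H|H]; last by case: H; apply/injectiveP.
by rewrite permE Hf.
Qed.

Lemma pnat_val m (s : 'S_m) (x : 'I_m) : pnat s (val x) = val (s x).
Proof. by rewrite /pnat valK. Qed.

Lemma pnat_ge m (s : 'S_m) x : (m <= x)%N -> pnat s x = x.
Proof. by move=> h; rewrite /pnat insubF //; apply/negbTE; rewrite -leqNgt. Qed.

Lemma pnat_lt m (s : 'S_m) x : (x < m)%N -> (pnat s x < m)%N.
Proof. by move=> h; rewrite /pnat insubT /=. Qed.

Lemma pnat_inj m (s : 'S_m) : injective (pnat s).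
Proof.
move=> x y.
case: (ltnP x m) => hx; case: (ltnP y m) => hy.
- rewrite -[x]/(val (Ordinal hx)) -[y]/(val (Ordinal hy)) !pnat_val.
  by move/val_inj/perm_inj => [].
- rewrite (pnat_ge s hy) => e. have := pnat_lt s hx. lia.
- rewrite (pnat_ge s hx) => e. have := pnat_lt s hy. lia.
- by rewrite (pnat_ge s hx) (pnat_ge s hy).
Qed.

Lemma pnat1 m x : pnat (1 : 'S_m) x = x.
Proof. case: (ltnP x m) => h; last exact: pnat_ge.
by rewrite -[x]/(val (Ordinal h)) pnat_val perm1. Qed.

Lemma pnatM m (p q : 'S_m) x : pnat (p * q) x = pnat q (pnat p x).
Proof. case: (ltnP x m) => h; last by rewrite !pnat_ge.
by rewrite -[x]/(val (Ordinal h)) !pnat_val permM. Qed.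

Lemma perm_pnat m (p q : 'S_m) : (forall x, (x < m)%N -> pnat p x = pnat q x) -> p = q.
Proof. move=> h; apply/permP => x; apply: val_inj; rewrite -!pnat_val; exact: h (ltn_ord x). Qed.

Lemma pnat_ext m k (s : 'S_m) x : (m <= k)%N -> pnat (ext_perm m k s) x = pnat s x.
Proof.
move=> mk; case: (ltnP x k) => h; last by rewrite !pnat_ge //; lia.
rewrite -[x]/(val (Ordinal h)) pnat_val /ext_perm mkperm_val //=.
- move=> y hy; case: (ltnP y m) => hym; [have := pnat_lt s hym|rewrite pnat_ge]; lia.
- by move=> y z _ _; apply: pnat_inj.
Qed.

Lemma pnat_shift n m (u : 'S_(m - n)) x : (n <= m)%N ->
  pnat (shift_perm n m u) x = if (x < n)%N then x else if (x < m)%N then (n + pnat u (x - n))%N else x.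
Proof.
move=> nm; case: (ltnP x m) => h; last by rewrite pnat_ge //; case: ifP => //; lia.
rewrite -[x]/(val (Ordinal h)) pnat_val /shift_perm mkperm_val //=.
- move=> y hy; case: ifP => // hyn. have h2 : (y - n < m - n)%N by lia. move: (pnat_lt u h2); set z := pnat u _. lia.
- move=> y z _ _; case: ifP; case: ifP => // hz hy.
  + lia.
  + lia.
  + move=> e. have : pnat u (y - n) = pnat u (z - n) by lia.
    move/pnat_inj. lia.
Qed.

Lemma pnat_beta n m x : (n <= m)%N ->
  pnat (beta_perm n m) x = if (x < n)%N then x else if x == n then m
                           else if (x <= m)%N then x.-1 else x.
Proof.
move=> nm; case: (ltnP x m.+1) => h; last by rewrite pnat_ge //; ifl.
rewrite -[x]/(val (Ordinal h)) pnat_val /beta_perm mkperm_val //=.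
- ifl.
- move=> y hy; ifl.
- move=> y z hy hz; ifl.
Qed.
Section Chr.
Variables (k m : nat) (f : 'I_k -> 'I_m).
Hypothesis finj : injective f.

Definition chr (s : 'S_k) (p : 'S_m) :=
  (forall y, p (f y) = f (s y)) /\ (forall x, (forall y, f y != x) -> p x = x).

Lemma chr1 : chr 1 1.
Proof. by split=> [y|x _]; rewrite !perm1. Qed.

Lemma chrM s s' p p' : chr s p -> chr s' p' -> chr (s * s') (p * p').
Proof.
move=> [h1 h2] [h1' h2']; split=> [y|x hx]; rewrite !permM.
- by rewrite h1 h1'.
- by rewrite h2 // h2'.
Qed.

Lemma chrT a b : chr (tperm a b) (tperm (f a) (f b)).
Proof.
split=> [y|x hx].
- case: (tpermP a b y) => [->|->|ha hb]; rewrite ?tpermL ?tpermR //.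
  by apply: tpermD; rewrite (inj_eq finj); apply/eqP => e; [apply: ha|apply: hb].
- by apply: tpermD; apply: hx.
Qed.

Lemma chr_uniq s p p' : chr s p -> chr s p' -> p = p'.
Proof.
move=> [h1 h2] [h1' h2']; apply/permP => x.
case: (pickP (fun y => f y == x)) => [y /eqP <- | H]; first by rewrite h1 h1'.
by rewrite h2 ?h2' // => y; rewrite H.
Qed.

Lemma chr_odd s p : chr s p -> odd_perm p = odd_perm s.
Proof.
case: (prod_tpermP s) => ts. move=> E. move=> _. rewrite {}E. elim: ts p => [|t ts IH] p.
  by rewrite big_nil => h; rewrite (chr_uniq h chr1) !odd_perm1.
rewrite big_cons => h.
have h' := chrM (chrT t.1 t.2) h.
rewrite mulgA tperm2 mul1g in h'.
have := IH _ h'; rewrite !odd_permM !odd_tperm (inj_eq finj) => e.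
by rewrite -e addbA addbb.
Qed.
End Chr.

Lemma ext_perm_id m (s : 'S_m) : ext_perm m m s = s.
Proof. by apply: perm_pnat => x _; rewrite pnat_ext. Qed.

Lemma ext_perm1 m k : (m <= k)%N -> ext_perm m k 1 = 1%g.
Proof. by move=> mk; apply: perm_pnat => x _; rewrite pnat_ext // !pnat1. Qed.

Lemma ext_permM m k (p q : 'S_m) : (m <= k)%N ->
  ext_perm m k (p * q) = (ext_perm m k p * ext_perm m k q)%g.
Proof. by move=> mk; apply: perm_pnat => x _; rewrite !pnatM !pnat_ext // pnatM. Qed.

Lemma shift_perm1 n m : (n <= m)%N -> shift_perm n m 1 = 1%g.
Proof. by move=> nm; apply: perm_pnat => x hx; rewrite pnat_shift // !pnat1 hx; ifl. Qed.

Lemma beta_perm1 n : beta_perm n n = 1%g.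
Proof. by apply: perm_pnat => x hx; rewrite pnat_beta // !pnat1; ifl. Qed.

Lemma odd_ext m k (s : 'S_m) : (m <= k)%N -> odd_perm (ext_perm m k s) = odd_perm s.
Proof.
move=> mk; apply: (@chr_odd _ _ (widen_ord mk)); first by move=> y z /(congr1 val) /= e; apply: val_inj.
split=> [y|x hx]; apply: val_inj; rewrite /= -!pnat_val pnat_ext //=.
case: (ltnP x m) => h; last exact: pnat_ge.
by have := hx (Ordinal h); rewrite eqE /= eqxx.
Qed.

Lemma shift_lt n m (y : 'I_(m - n)) : (n <= m)%N -> (n + y < m)%N.
Proof. move=> nm; have := ltn_ord y; lia. Qed.

Lemma odd_shift n m (u : 'S_(m - n)) : (n <= m)%N ->
  odd_perm (shift_perm n m u) = odd_perm u.
Proof.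
move=> nm; pose f := fun y : 'I_(m - n) => Ordinal (shift_lt y nm).
apply: (@chr_odd _ _ f).
  by move=> y z [] /eqP; rewrite eqn_add2l => /eqP e; apply: val_inj.
split=> [y|x hx]; apply: val_inj; rewrite /= -!pnat_val pnat_shift //=.
  by rewrite addKn ltnNge leq_addr /= (shift_lt y nm).
case: ifP => // hxn; case: ifP => // hxm.
have hy : (x - n < m - n)%N by lia.
have := hx (Ordinal hy); rewrite eqE /= => /eqP; lia.
Qed.

Lemma tperm_val k (a b X : 'I_k) :
  val (tperm a b X) = if X == a then val b else if X == b then val a else val X.
Proof.
case: tpermP => [->|->|ha hb]; rewrite ?eqxx //.
- by case: (b =P a) => // ->.
- by move/eqP/negbTE: ha => ->; move/eqP/negbTE: hb => ->.
Qed.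

Lemma pnat_tperm k (a b : 'I_k) x : (x < k)%N ->
  pnat (tperm a b) x = if x == a then nat_of_ord b else if x == nat_of_ord b then nat_of_ord a else x.
Proof. by move=> h; rewrite -[x]/(val (Ordinal h)) pnat_val tperm_val. Qed.

Lemma odd_beta n m : (n <= m)%N -> odd_perm (beta_perm n m) = odd (m - n).
Proof.
elim: m => [|m IH] nm.
  have -> : n = 0%N by lia.
  by rewrite beta_perm1 odd_perm1.
case: (ltnP m n) => h.
  have -> : n = m.+1 by lia.
  by rewrite beta_perm1 odd_perm1 subnn.
have -> : beta_perm n m.+1 =
  (ext_perm m.+1 m.+2 (beta_perm n m) * tperm (inord m) ord_max)%g.
  apply: perm_pnat => x hx.
  rewrite pnatM pnat_ext // pnat_beta // pnat_beta //.
  have hl : (pnat (beta_perm n m) x < m.+2)%N.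
    rewrite pnat_beta //; ifl.
  rewrite pnat_tperm; last by rewrite pnat_beta // in hl.
  have hi : nat_of_ord (inord m : 'I_m.+2) = m by apply: inordK.
  rewrite hi /=. ifl.
rewrite odd_permM odd_ext // IH // odd_tperm.
have -> : (inord m != ord_max :> 'I_m.+2).
  by apply/eqP => /(congr1 val); rewrite /= inordK //; lia.
by rewrite subSn //= addbT.
Qed.

Ltac splitifs := repeat (first [ match goal with H : context [if _ then _ else _] |- _ => move: H end
  | match goal with |- context [if ?b then _ else _] => case: (@idP b) => ? end ]); intros.
Ltac gen_pnat := repeat (match goal with H : context [pnat _ _] |- _ => move: H end); repeat match goal with |- context [@pnat ?m ?s ?y] =>
  move: (@pnat_lt m s y) (@pnat_ge m s y); generalize (@pnat m s y) => ? end.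

Lemma perm_small k (s : 'S_k) : (k <= 1)%N -> s = 1%g.
Proof.
move=> hk; apply: perm_pnat => x hx; rewrite pnat1.
have := pnat_lt s hx; lia.
Qed.

Lemma hat_eq m (p q : hat m) : p.1 = q.1 -> p.2 = q.2 -> p = q.
Proof. by case: p; case: q => /= ? ? ? ? -> ->. Qed.

Lemma inHat_d0 m (s : hat m) : inHat s -> (m <= 1)%N -> s.2 = 0%R.
Proof.
rewrite /inHat; case: ifP => [h1 _ h2|_ /eqP //]. lia.
Qed.

Lemma inHat_odd m (s : hat m) : inHat s -> odd_perm s.1 = odd `|s.2|%N.
Proof.
move=> h; case: (leqP m 1) => hm.
  by rewrite (inHat_d0 h hm) (perm_small s.1 hm) odd_perm1.
by move: h; rewrite /inHat hm => /eqP.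
Qed.

Lemma inHatP m (s : hat m) : ((1 < m)%N -> odd_perm s.1 = odd `|s.2|%N) ->
  ((m <= 1)%N -> s.2 = 0%R) -> inHat s.
Proof. rewrite /inHat; case: ifP => h h1 h2; [rewrite h1 | rewrite h2] => //; lia. Qed.

Lemma oddabsD (a b : int) : odd `|(a + b)%R|%N = odd `|a|%N (+) odd `|b|%N.
Proof. case: (odd `|a|%N) / idP; case: (odd `|b|%N) / idP; case: (odd `|(a+b)%R|%N) / idP => //=; lia. Qed.

Lemma inHat_plus1 n m (s : hat m) : (n <= m)%N -> inHat s -> inHat (plus1 n m s).
Proof.
move=> nm hs; apply: inHatP => /= [hm|hm].
  rewrite odd_permM odd_beta // odd_ext // oddabsD (inHat_odd hs) absz_nat.
  by rewrite addbC.
have hm0 : m = 0%N by lia.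
rewrite (inHat_d0 hs) ?hm0 //=; lia.
Qed.

Lemma plus1_hone n : plus1 n n (hone n) = hone n.+1.
Proof.
apply: hat_eq => /=; first by rewrite beta_perm1 ext_perm1 // mulg1.
by rewrite subnn.
Qed.

Lemma plus1_coset n m (s : hat m) (u : hat (m - n)) : (n <= m)%N ->
  plus1 n m (hmul s (i2 n m u)) = hmul (plus1 n m s) (i2 n.+1 m.+1 u).
Proof.
move=> nm; apply: hat_eq => /=; last by rewrite -!GRing.addrA (GRing.addrC u.2).
apply: perm_pnat => x hx.
rewrite !pnatM !pnat_ext // pnatM pnat_beta // pnat_shift // pnat_shift //.
rewrite pnat_beta //.
have e : forall y, @pnat (m.+1 - n.+1) u.1 (y - n.+1) = @pnat (m - n) u.1 (y.-1 - n).
  by move=> y; congr pnat; lia.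
rewrite e; congr pnat.
clear e; splitifs; gen_pnat; intros; lia.
Qed.

Lemma plus1_comp n m k (s : hat m) (t : hat k) : (n <= m)%N -> (m <= k)%N ->
  hmul (plus1 m k t) (i1 m.+1 k.+1 (plus1 n m s)) = plus1 n k (hmul t (i1 m k s)).
Proof.
move=> nm mk; have nk : (n <= k)%N by lia.
have mk1 : (m.+1 <= k.+1)%N by [].
have mk2 : (m <= m.+1)%N by lia.
have kk2 : (k <= k.+1)%N by lia.
apply: hat_eq => /=; last by lia.
apply: perm_pnat => x hx.
rewrite !pnatM !pnat_ext // !pnatM !pnat_ext //.
congr pnat; rewrite !pnat_beta //.
splitifs; gen_pnat; intros; lia.
Qed.

Lemma sigma_mod (M : FIhatData) : isFIhatModule M -> isFIhatModule (Sigma M).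
Proof.
case=> [Hcos [Hid Hcomp]]; split; [|split].
- move=> n m s u nm hs hu x /=; rewrite plus1_coset //.
  exact: (Hcos n.+1 m.+1 (plus1 n m s) u _ (inHat_plus1 nm hs) hu).
- by move=> n x /=; rewrite plus1_hone; apply: Hid.
- move=> n m k s t nm mk hs ht x /=.
  by rewrite Hcomp ?inHat_plus1 // plus1_comp.
Qed.

Definition Zc (M : FIhatData) (c : nat) : Prop :=
  forall N : nat, (c <= N)%N -> forall (j : int) (x : Mob M N),
    Mmap M N N ((1%g, (2 * j)%R) : hat N) x = x.

Lemma sigma_Z (M : FIhatData) c : Zc M c -> Zc (Sigma M) c.-1.
Proof.
move=> hZ N hN j x /=.
have -> : plus1 N N ((1%g, (2 * j)%R) : hat N) = ((1%g, (2 * j)%R) : hat N.+1).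
  apply: hat_eq => /=; first by rewrite beta_perm1 ext_perm1 // mulg1.
  by rewrite subnn GRing.addr0.
apply: hZ; lia.
Qed.

Lemma inHat_2j N (j : int) : (1 < N)%N -> inHat ((1%g, (2 * j)%R) : hat N).
Proof.
move=> hN; apply: inHatP => [_|]; last by lia.
rewrite odd_perm1 /=; lia.
Qed.

Lemma base_Z (M : FIhatData) a : isFIhatModule M -> genDegLe M a -> Zc M (a + 2).
Proof.
case=> [Hcos [Hid Hcomp]] [W [act [phi [Hz [_ [_ [_ Hgen]]]]]]] N hN j x.
have [l [Hall ->]] := Hgen N x.
elim: l Hall => [|p l IH] /=; first by rewrite !big_nil GRing.raddf0.
case/andP => /andP [hpn hps] hl; rewrite !big_cons GRing.raddfD IH //.
congr (_ + _)%R.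
case: p hpn hps => n [s w] /= hn hs.
case: (ltnP a n) => ha.
  by rewrite (Hz n ha w) !GRing.raddf0.
rewrite Hcomp ?inHat_2j //; last by lia.
have hu : inHat ((1%g, (2 * j)%R) : hat (N - n)) by apply: inHat_2j; lia.
rewrite -(Hcos n N s _ hn hs hu); congr (Mmap M n N _ _).
apply: hat_eq => /=; last by rewrite GRing.addrC.
by rewrite ext_perm_id mulg1 shift_perm1 // mul1g.
Qed.

Lemma fin_FI (M : FIhatData) : isFIhatModule M -> Zc M 0 -> factorsThroughFI M.
Proof.
case=> [Hcos [Hid Hcomp]] hZ n m s t nm hs ht hst x.
pose r := (t.1 * s.1^-1)%g.
have hr : forall i, (i < n)%N -> pnat r i = i.
  move=> i hi; have him : (i < m)%N by lia.
  by rewrite -[i]/(val (Ordinal him)) pnat_val permM -hst // permK.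
have hrge : forall i, (n <= i)%N -> (n <= pnat r i)%N.
  move=> i hi; case: (ltnP (pnat r i) n) => // h.
  have := hr _ h => /pnat_inj e; lia.
pose g := fun y => (pnat r (n + y) - n)%N.
have hg1 : forall y, (y < m - n)%N -> (g y < m - n)%N.
  move=> y hy; have := @pnat_lt _ r (n + y); have := hrge (n + y); rewrite /g; lia.
have hg2 : forall y z, (y < m - n)%N -> (z < m - n)%N -> g y = g z -> y = z.
  move=> y z hy hz; rewrite /g => e.
  have e2 : pnat r (n + y) = pnat r (n + z).
    have := hrge (n + y); have := hrge (n + z); lia.
  move/pnat_inj: e2; lia.
pose u1 : 'S_(m - n) := mkperm (@fun_ord (m - n) g).
have hu1 : shift_perm n m u1 = r.
  apply: perm_pnat => y hy; rewrite pnat_shift // hy.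
  case: ifP => [h|h]; first by rewrite hr.
  have hyn : (y - n < m - n)%N by lia.
  rewrite -[(y - n)%N]/(val (Ordinal hyn)) pnat_val mkperm_val //= /g.
  have -> : (n + (y - n))%N = y by lia.
  have := hrge y; lia.
have ht1 : t.1 = (shift_perm n m u1 * s.1)%g by rewrite hu1 mulgKV.
case: (leqP (m - n) 1) => hmn.
  have {}ht1 : t.1 = s.1 by rewrite ht1 (perm_small u1 hmn) shift_perm1 // mul1g.
  case: (leqP m 1) => hm.
    have -> : t = s by apply: hat_eq; rewrite // (inHat_d0 hs hm) (inHat_d0 ht hm).
    by [].
  have hpar := inHat_odd hs; have hpar2 := inHat_odd ht.
  rewrite ht1 in hpar2.
  pose j := ((t.2 - s.2) %/ 2)%Z.
  have hj : t.2 = (2 * j + s.2)%R.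
    rewrite /j; move: hpar hpar2; case: (odd_perm s.1) => hp1 hp2; lia.
  rewrite -(hZ m _ j (Mmap M n m s x)) // Hcomp ?inHat_2j //.
  congr (Mmap M n m _ _); apply: hat_eq => /=.
    by rewrite ext_perm_id mulg1.
  by rewrite hj.
pose u : hat (m - n) := (u1, (t.2 - s.2)%R).
have hu : inHat u.
  apply: inHatP => [_|]; last by lia.
  rewrite /= -(odd_shift u1 nm) hu1 odd_permM odd_permV.
  rewrite oddabsD abszN -(inHat_odd ht) -(inHat_odd hs) addbC //.
rewrite -(Hcos n m s u nm hs hu x); congr (Mmap M n m _ _).
apply: hat_eq => /=; first by rewrite ht1.
lia.
Qed.

Lemma iter_sigma (M : FIhatData) c : isFIhatModule M -> Zc M c ->
  forall j, isFIhatModule (iter j Sigma M) /\ Zc (iter j Sigma M) (c - j).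
Proof.
move=> hM hZ; elim=> [|j [IH1 IH2]]; first by rewrite subn0.
rewrite iterS subnS; split; [exact: sigma_mod | exact: sigma_Z].
Qed.

Theorem mainTheorem10 (M : FIhatData) (a : nat) :
  isFIhatModule M -> genDegLe M a -> isFImodule (iter (a + 2) Sigma M).
Proof.
move=> hM hG.
have [h1 h2] := iter_sigma hM (base_Z hM hG) (a + 2).
rewrite subnn in h2.
by split => //; apply: fin_FI.
Qed.
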